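(* Let $D\geq 4$ and $n\geq 1$ be integers. Let $\mathcal{S}_{(1)},\mathcal{S}_{(2)},\mathcal{S}_{(3)},\mathcal{S}_{(n+2)},\mathcal{S}_{(n+3)},\mathcal{S}_{(n+4)}$ be scalar curvature invariants (built from the metric and the Riemann tensor) such that for each of these orders $m\in\{1,2,3,n+2,n+3,n+4\}$ and every function $f(r)$ $$\mathcal{S}_{(m)}|_f = r^{2-D}\frac{\mathrm{d}}{\mathrm{d}r}\Big[r^{D-1}\Big(B+\tfrac{D-4}{4}\psi\Big)^{m-1}\Big(2(m-2)B-(D-4+2m)\psi\Big)\Big].$$ Define $$\mathcal{S}_{(n+5)}=-\frac{3(n+3)\mathcal{S}_{(1)}\mathcal{S}_{(n+4)}}{4(D-1)(n+1)}+\frac{3(n+4)\mathcal{S}_{(2)}\mathcal{S}_{(n+3)}}{4(D-1)n}-\frac{(n+3)(n+4)\mathcal{S}_{(3)}\mathcal{S}_{(n+2)}}{4(D-1)n(n+1)}.$$ Then for every $f(r)$, $\mathcal{S}_{(n+5)}|_f$ is given by the same formula with $m=n+5$; in particular $\mathcal{S}_{(n+5)}$ is of the GQTG class.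
   Context: Consider the metric $\mathrm{d}s^2=-f(r)\mathrm{d}t^2+\mathrm{d}r^2/f(r)+r^2\mathrm{d}\Sigma^2_{k}$ in $D$ dimensions, where $\mathrm{d}\Sigma^2_k$ is the metric of a $(D-2)$-dimensional space of constant sectional curvature $k\in\{1,0,-1\}$. For a scalar curvature invariant $\mathcal{L}$, $\mathcal{L}|_f$ denotes its evaluation on this metric, a function of $r,f,f',f''$. Set $A=f''(r)/2$, $B=-f'(r)/(2r)$, $\psi=(k-f(r))/r^2$. A density $\mathcal{L}$ is of the GQTG class if $r^{D-2}\mathcal{L}|_f=\frac{\mathrm{d}}{\mathrm{d}r}F_0(r,f,f')$ for some function $F_0$, for all $f$ (equivalently, the Euler–Lagrange equation of $f$ for $r^{D-2}\mathcal{L}|_f$ vanishes identically). *)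

(* Defs.v *)
From Stdlib Require Import Reals.
From Coquelicot Require Import Coquelicot.
Open Scope R_scope.

(* Evaluation of a scalar density on the ansatz f : its value at radius r is a
   function of the profile f.  We model an invariant through its evaluation map
   L|_f, i.e. a map  (R -> R) -> (R -> R). *)

Definition Bf (f : R -> R) (r : R) : R := - Derive f r / (2 * r).

Definition psif (k : R) (f : R -> R) (r : R) : R := (k - f r) / r ^ 2.

Definition bracket (D : nat) (k : R) (m : nat) (f : R -> R) (r : R) : R :=
  r ^ (D - 1) * (Bf f r + (INR D - 4) / 4 * psif k f r) ^ (m - 1)
  * (2 * (INR m - 2) * Bf f r - (INR D - 4 + 2 * INR m) * psif k f r).

Definition Sform (D : nat) (k : R) (m : nat) (f : R -> R) (r : R) : R :=
  / r ^ (D - 2) * Derive (bracket D k m f) r.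

Definition twice_diff (f : R -> R) : Prop :=
  (forall x, ex_derive f x) /\ (forall x, ex_derive (Derive f) x).

Definition GQTG (D : nat) (L : (R -> R) -> R -> R) : Prop :=
  exists F0 : R -> R -> R -> R,
    forall f : R -> R, twice_diff f -> forall r : R, 0 < r ->
      r ^ (D - 2) * L f r = Derive (fun x => F0 x (f x) (Derive f x)) r.

(* Main.v *)
Require Import Defs.
From Stdlib Require Import Reals Lra Lia Field.
From Coquelicot Require Import Coquelicot.
Open Scope R_scope.

Lemma Sform_val (D m : nat) (k : R) f r : (2 <= D)%nat -> (1 <= m)%nat -> twice_diff f -> 0 < r ->
  let Dr := INR D in
  let B := Bf f r in let ps := psif k f r in
  let a := Derive (Derive f) r in
  let X := B + (Dr - 4)/4 * ps in
  let mr := INR m in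
  let Xr := -(a/2) - B + (Dr-4)/2*(B-ps) in
  let Y := 2*(mr-2)*B - (Dr-4+2*mr)*ps in
  let Yr := -2*(mr-2)*(a/2+B) - (Dr-4+2*mr)*(2*B-2*ps) in
  Sform D k m f r = (Dr - 1) * X^(m-1) * Y + (mr - 1) * X^(pred (m-1)) * Xr * Y + X^(m-1) * Yr.
Proof.
intros HD Hm [H1 H2] Hr Dr B ps a X mr Xr Y Yr.
evar (L:R).
assert (Hd: is_derive (bracket D k m f) r L).
{ subst L; unfold bracket, Bf, psif. auto_derive.
  - repeat split; auto; try apply H1; try apply H2; nra.
  - reflexivity. }
unfold Sform. rewrite (is_derive_unique _ _ _ Hd). subst L.
replace (D - 1)%nat with (S (D-2)) by lia.
replace (Init.Nat.pred (S (D-2))) with (D-2)%nat by reflexivity.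
change (fun x => Derive f x) with (Derive f).
change (fun x => f x) with f.
rewrite S_INR, minus_INR by lia.
rewrite minus_INR by lia.
subst X Y Yr Xr mr a B ps Dr. unfold Bf, psif.
assert (Hr2: r ^ (D-2) <> 0) by (apply pow_nonzero; lra).
generalize (Derive (Derive f) r) (Derive f r) (f r); intros a p q.
set (XX := (- p / (2 * r) + (INR D - 4) / 4 * ((k - q) / r ^ 2))).
replace (- p * / (2 * r) + (INR D - 4) / 4 * ((k + - q) * / (r * (r * 1)))) with XX by (unfold XX; simpl; field; lra).
set (U := XX ^ (m-1)). set (V := XX ^ pred (m-1)).
set (W := r ^ (D-2)) in *.
unfold XX; simpl.
change (r ^ (D-2)) with W. field. repeat split; try exact Hr2; lra.
Qed.

Definition Xv D k f r := Bf f r + (INR D - 4)/4 * psif k f r.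
Definition Pv D k f r (mr : R) Xa Xb :=
  let Dr := INR D in
  let B := Bf f r in let ps := psif k f r in
  let a := Derive (Derive f) r in
  let X := B + (Dr - 4)/4 * ps in
  let Xr := -(a/2) - B + (Dr-4)/2*(B-ps) in
  let Y := 2*(mr-2)*B - (Dr-4+2*mr)*ps in
  let Yr := -2*(mr-2)*(a/2+B) - (Dr-4+2*mr)*(2*B-2*ps) in
  (Dr - 1) * Xa * Y + (mr - 1) * Xb * Xr * Y + Xa * Yr.

Lemma Sform_val' (D m : nat) (k : R) f r : (2 <= D)%nat -> (1 <= m)%nat -> twice_diff f -> 0 < r ->
  Sform D k m f r = Pv D k f r (INR m) (Xv D k f r ^ (m-1)) (Xv D k f r ^ (pred (m-1))).
Proof. intros. rewrite Sform_val; auto. Qed.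

Theorem mainTheorem2 (D n : nat) (k : R)
  (S1 S2 S3 Sn2 Sn3 Sn4 : (R -> R) -> R -> R) :
  (4 <= D)%nat -> (1 <= n)%nat ->
  (k = 1 \/ k = 0 \/ k = -1) ->
  (forall f, twice_diff f -> forall r, 0 < r ->
     S1 f r = Sform D k 1 f r /\ S2 f r = Sform D k 2 f r /\
     S3 f r = Sform D k 3 f r /\ Sn2 f r = Sform D k (n + 2) f r /\
     Sn3 f r = Sform D k (n + 3) f r /\ Sn4 f r = Sform D k (n + 4) f r) ->
  let Dr := INR D in
  let nr := INR n in
  let Sn5 : (R -> R) -> R -> R := fun f r =>
      - (3 * (nr + 3) * S1 f r * Sn4 f r) / (4 * (Dr - 1) * (nr + 1))
      + (3 * (nr + 4) * S2 f r * Sn3 f r) / (4 * (Dr - 1) * nr)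
      - ((nr + 3) * (nr + 4) * S3 f r * Sn2 f r) / (4 * (Dr - 1) * nr * (nr + 1)) in
  (forall f, twice_diff f -> forall r, 0 < r -> Sn5 f r = Sform D k (n + 5) f r)
  /\ GQTG D Sn5.
Proof.
intros HD Hn Hk HS Dr nr Sn5.
assert (HDr : Dr - 1 <> 0).
{ subst Dr. apply le_INR in HD. simpl in HD. lra. }
assert (Hnr : nr <> 0).
{ subst nr. apply le_INR in Hn. simpl in Hn. lra. }
assert (Hnr1 : nr + 1 <> 0).
{ subst nr. apply le_INR in Hn. simpl in Hn. lra. }
assert (Main : forall f, twice_diff f -> forall r, 0 < r -> Sn5 f r = Sform D k (n + 5) f r).
{ intros f Hf r Hr. unfold Sn5.
  destruct (HS f Hf r Hr) as [e1 [e2 [e3 [e4 [e5 e6]]]]].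
  rewrite e1, e2, e3, e4, e5, e6.
  rewrite !Sform_val' by (auto; lia).
  replace (n + 2 - 1)%nat with (n + 1)%nat by lia.
  replace (n + 3 - 1)%nat with (n + 2)%nat by lia.
  replace (n + 4 - 1)%nat with (n + 3)%nat by lia.
  replace (n + 5 - 1)%nat with (n + 4)%nat by lia.
  replace (pred (n + 1)) with n by lia.
  replace (pred (n + 2)) with (n + 1)%nat by lia.
  replace (pred (n + 3)) with (n + 2)%nat by lia.
  replace (pred (n + 4)) with (n + 3)%nat by lia.
  simpl (1 - 1)%nat. simpl (2 - 1)%nat. simpl (3 - 1)%nat. simpl (pred 0). simpl (pred 1). simpl (pred 2).
  rewrite !pow_add.
  rewrite !plus_INR.
  fold nr. fold Dr.
  set (Xn := Xv D k f r ^ n).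
  unfold Pv, Xv. cbv zeta. fold Dr.
  assert (I1 : INR 1 = 1) by reflexivity.
  assert (I2 : INR 2 = 2) by (simpl; lra).
  assert (I3 : INR 3 = 3) by (simpl; lra).
  assert (I4 : INR 4 = 4) by (simpl; lra).
  assert (I5 : INR 5 = 5) by (simpl; lra).
  rewrite ?I1, ?I2, ?I3, ?I4, ?I5.
  field. auto. }
split; [exact Main|].
exists (fun x y z => x ^ (D - 1) * (- z / (2 * x) + (INR D - 4) / 4 * ((k - y) / x ^ 2)) ^ (n + 5 - 1)
   * (2 * (INR (n + 5) - 2) * (- z / (2 * x)) - (INR D - 4 + 2 * INR (n + 5)) * ((k - y) / x ^ 2))).
intros f Hf r Hr.
rewrite Main by auto.
unfold Sform.
field_simplify_eq.
- reflexivity.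
- apply pow_nonzero; lra.
Qed.
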